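(* Let $\mathcal{A}$ be a central and essential arrangement in $\mathbb{Q}^l$ as in the context, $\sigma$ a term ordering and $p$ a prime. If $p$ is $(\sigma,2)$-lucky for $\mathcal{A}$, then $p$ is good for $\mathcal{A}$.
   Context: $\mathcal{A}=\{H_1,\dots,H_n\}$: $n$ distinct linear hyperplanes in $\mathbb{Q}^l$ with $\bigcap H_i=\{0\}$, $H_i=\{\alpha_i=0\}$, $\alpha_i\in\mathbb{Z}[x_1,\dots,x_l]$ a nonzero linear form whose coefficients are not all divisible by any prime, $Q(\mathcal{A})=\prod\alpha_i$. $p$ is good for $\mathcal{A}$ if the reduction of $Q(\mathcal{A})$ mod $p$ is reduced, equivalently the reductions $(\alpha_i)_p,(\alpha_j)_p$ are not scalar multiples of one another for all $i<j$. For a term ordering $\sigma$ and nonzero $f\in\mathbb{Z}[x_1,\dots,x_l]$, $\mathrm{LM}_\sigma(f)$ is the $\sigma$-leading term times its coefficient $\mathrm{LC}_\sigma(f)$. A minimal strong $\sigma$-Gröbner basis of an ideal $I\subseteq\mathbb{Z}[x_1,\dots,x_l]$ is a finite generating set $G$ of nonzero elements of $I$ such that every nonzero $f\in I$ has $\mathrm{LM}_\sigma(f)$ divisible by some $\mathrm{LM}_\sigma(g)$, $g\in G$, and no $\mathrm{LM}_\sigma(g)$ divides $\mathrm{LM}_\sigma(g')$ for distinct $g,g'$; its set of leading coefficients is independent of the choice. $p$ is $\sigma$-lucky for $I$ if it divides none of them. For $1\le k\le n$, $p$ is $(\sigma,k)$-lucky for $\mathcal{A}$ if it is $\sigma$-lucky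 for every ideal $\langle\alpha_{i_1},\dots,\alpha_{i_k}\rangle\subseteq\mathbb{Z}[x_1,\dots,x_l]$ with $i_1<\dots<i_k$ and $\operatorname{codim}(H_{i_1}\cap\dots\cap H_{i_k})=k$. *)

(* Defs.v *)
From HB Require Import structures.
From mathcomp Require Import all_boot all_order all_algebra.
From mathcomp Require Import mpoly.
Set Implicit Arguments. Unset Strict Implicit. Unset Printing Implicit Defensive.
Import Order.TTheory GRing.Theory Num.Theory.
Local Open Scope ring_scope.

(* An arrangement of n hyperplanes in Q^l is given by integer coefficient
   vectors a : 'I_n -> 'I_l -> int; alpha_i = \sum_j a i j * x_j. *)

Definition arr_mx (l n : nat) (a : 'I_n -> 'I_l -> int) : 'M[rat]_(l, n) :=
  \matrix_(j < l, i < n) (a i j)%:~R.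

Definition hyp (l n : nat) (a : 'I_n -> 'I_l -> int) (i : 'I_n) : pred 'rV[rat]_l :=
  [pred x | x *m col i (arr_mx a) == 0].

(* matrix whose columns are those of arr_mx a indexed by S, others zero;
   its left kernel is the intersection of the H_i, i in S *)
Definition arr_mxS (l n : nat) (a : 'I_n -> 'I_l -> int) (S : {set 'I_n}) : 'M[rat]_(l, n) :=
  \matrix_(j < l, i < n) (if i \in S then (a i j)%:~R else 0).

Definition codim_int (l n : nat) (a : 'I_n -> 'I_l -> int) (S : {set 'I_n}) : nat :=
  (l - \rank (kermx (arr_mxS a S)))%N.

(* standing assumptions: distinct hyperplanes, nonzero primitive forms,
   central (automatic: linear forms) and essential *)
Definition arrangement (l n : nat) (a : 'I_n -> 'I_l -> int) : Prop :=
  [/\ (forall i, exists j, a i j != 0),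
      (forall i (p : nat), prime p -> exists j, ~~ (p%:Z %| a i j)%Z),
      (forall i i', i != i' -> ~ (hyp a i =i hyp a i')) &
      (forall x : 'rV[rat]_l, (forall i, x \in hyp a i) -> x = 0)].

Definition alpha (l n : nat) (a : 'I_n -> 'I_l -> int) (i : 'I_n) : {mpoly int[l]} :=
  \sum_(j < l) a i j *: 'X_j.

Definition defpoly (l n : nat) (a : 'I_n -> 'I_l -> int) : {mpoly int[l]} :=
  \prod_(i < n) alpha a i.

(* f in F_p[x] is reduced (square-free): any g with g^2 | f is a constant *)
Definition reduced_poly (l : nat) (F : nzRingType) (f : {mpoly F[l]}) : Prop :=
  forall g h : {mpoly F[l]}, f = g * g * h -> (msize g <= 1)%N.

Definition good (l n : nat) (a : 'I_n -> 'I_l -> int) (p : nat) : Prop :=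
  reduced_poly (map_mpoly (fun z : int => (z%:~R : 'F_p)) (defpoly a)).

Definition term_order (l : nat) (le : rel 'X_{1..l}) : Prop :=
  [/\ reflexive le, transitive le, antisymmetric le & total le] /\
  [/\ (forall m, le 0%MM m) &
      (forall m1 m2 m, le m1 m2 -> le (m1 + m)%MM (m2 + m)%MM)].

Definition is_lead (l : nat) (le : rel 'X_{1..l}) (f : {mpoly int[l]}) (m : 'X_{1..l}) : Prop :=
  m \in msupp f /\ {in msupp f, forall m', le m' m}.

Definition LM_dvd (l : nat) (le : rel 'X_{1..l}) (g f : {mpoly int[l]}) : Prop :=
  exists mg mf, [/\ is_lead le g mg, is_lead le f mf,
                    (g@_mg %| f@_mf)%Z & (mg <= mf)%MM].

Definition in_ideal (l : nat) (gens : seq {mpoly int[l]}) (f : {mpoly int[l]}) : Prop :=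
  exists h : 'I_(size gens) -> {mpoly int[l]},
    f = \sum_(i < size gens) h i * gens`_i.

Definition min_strong_GB (l : nat) (le : rel 'X_{1..l})
    (gens G : seq {mpoly int[l]}) : Prop :=
  [/\ (forall g, g \in G -> g != 0 /\ in_ideal gens g),
      (forall f, in_ideal gens f -> in_ideal G f),
      (forall f, in_ideal gens f -> f != 0 -> exists2 g, g \in G & LM_dvd le g f) &
      (forall g g', g \in G -> g' \in G -> g != g' -> ~ LM_dvd le g g')].

Definition lucky (l : nat) (le : rel 'X_{1..l}) (p : nat) (gens : seq {mpoly int[l]}) : Prop :=
  forall G, min_strong_GB le gens G ->
    forall g m, g \in G -> is_lead le g m -> ~ (p%:Z %| g@_m)%Z.

Definition k_lucky (l n : nat) (a : 'I_n -> 'I_l -> int) (le : rel 'X_{1..l})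
    (k p : nat) : Prop :=
  forall S : {set 'I_n}, #|S| = k -> codim_int a S = k ->
    lucky le p [seq alpha a i | i in S].

(* Main.v *)
Require Import Defs.
From HB Require Import structures.
From mathcomp Require Import all_boot all_order all_algebra.
From mathcomp Require Import mpoly.
From mathcomp Require Import zify ring.
From Stdlib Require Import Classical ClassicalEpsilon Lia.
Set Implicit Arguments. Unset Strict Implicit. Unset Printing Implicit Defensive.
Import Order.TTheory GRing.Theory Num.Theory.

Local Open Scope ring_scope.

Section TO.
Variable l : nat.
Variable le : rel 'X_{1..l}.
Hypothesis hto : term_order le.

Lemma to_refl : reflexive le. Proof. by case: hto => -[]. Qed.
Lemma to_trans : transitive le. Proof. by case: hto => -[]. Qed.
Lemma to_anti : antisymmetric le. Proof. by case: hto => -[]. Qed.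
Lemma to_total : total le. Proof. by case: hto => -[]. Qed.
Lemma to_0 m : le 0%MM m. Proof. by case: hto => _ []. Qed.
Lemma to_add m1 m2 m : le m1 m2 -> le (m1 + m)%MM (m2 + m)%MM.
Proof. by case: hto => _ [] _; apply. Qed.

Lemma to_div m1 m2 : (m1 <= m2)%MM -> le m1 m2.
Proof.
move=> h; rewrite -(submK h).
have := to_add m1 (to_0 (m2 - m1)%MM); by rewrite add0m.
Qed.

Lemma lead_uniq (f : {mpoly int[l]}) m1 m2 :
  is_lead le f m1 -> is_lead le f m2 -> m1 = m2.
Proof.
move=> [h1 h1'] [h2 h2']; apply: to_anti.
by rewrite (h2' _ h1) (h1' _ h2).
Qed.

Lemma seq_max (T : eqType) (r : rel T) (s : seq T) :
  total r -> transitive r -> s != [::] -> exists2 x, x \in s & forall y, y \in s -> r y x.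
Proof.
move=> tot tr; elim: s => // a s IH _.
case: s IH => [|b s] IH.
  exists a; first by rewrite inE. by move=> y; rewrite inE => /eqP ->; have := tot a a; rewrite orbb.
have [x xs hx] := IH isT.
case/orP: (tot x a) => hxa.
  exists a; first by rewrite inE eqxx.
  move=> y; rewrite inE => /orP [/eqP ->|ys]; first by have := tot a a; rewrite orbb.
  exact: tr (hx _ ys) hxa.
exists x; first by rewrite inE xs orbT.
by move=> y; rewrite inE => /orP [/eqP ->|ys] //; apply: hx.
Qed.

Lemma lead_exists (f : {mpoly int[l]}) : f != 0 -> exists m, is_lead le f m.
Proof.
move=> nz; have : msupp f != [::] by rewrite msupp_eq0.
case E: (msupp f) => [|m0 s] // _.
have [x xs hx] := @seq_max _ le (msupp f) to_total to_trans ltac:(by rewrite E).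
by exists x; split.
Qed.

End TO.

Local Close Scope ring_scope.

Definition dick_basis l (U : 'X_{1..l} -> Prop) (k : nat) (B : seq 'X_{1..l}) :=
  (forall b, b \in B -> U b) /\
  (forall m, U m -> exists2 b, b \in B & forall i : 'I_l, (i < k)%N -> (b i <= m i)%N).

Lemma dickson_k l k : forall U : 'X_{1..l} -> Prop, exists B, dick_basis U k B.
Proof.
elim: k => [|k IH] U.
  case: (classic (exists u, U u)) => [[u Uu]|nU].
    exists [:: u]; split; first by move=> b; rewrite inE => /eqP ->.
    by move=> m _; exists u; rewrite ?inE.
  exists [::]; split => // m Um; case: nU; by exists m.
case: (ltnP k l) => [kl|lk]; last first.
  have [B [BU HB]] := IH U; exists B; split => // m /HB [b bB hb]; exists b => // i ik.
  apply: hb; rewrite ltnS leq_eqVlt in ik; case/orP: ik => // /eqP ei.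
  by have := ltn_ord i; rewrite ei ltnNge lk.
pose i0 := Ordinal kl.
have [B [BU HB]] := IH U.
pose N := \max_(b <- B) b i0.
suff HH : exists B2 : seq _, (forall b, b \in B2 -> U b) /\
  forall m, U m -> (m i0 < N)%N -> exists2 b, b \in B2 & forall i : 'I_l, (i < k.+1)%N -> (b i <= m i)%N.
  case: HH => B2 [B2U HB2].
  exists (B ++ B2); split.
    by move=> b; rewrite mem_cat => /orP [] ?; [apply: BU|apply: B2U].
  move=> m Um; case: (ltnP (m i0) N) => hm.
    by have [b bB hb] := HB2 m Um hm; exists b => //; rewrite mem_cat bB orbT.
  have [b bB hb] := HB m Um; exists b; first by rewrite mem_cat bB.
  move=> i; rewrite ltnS leq_eqVlt => /orP [/eqP ei|]; last exact: hb.
  have -> : i = i0 by apply: val_inj.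
  apply: leq_trans hm; rewrite /N.
  by rewrite (big_rem b) //= leq_maxl.
elim: N => [|N IHN]; first by exists [::]; split => // m _.
have [B2 [B2U HB2]] := IHN.
have [B3 [B3U HB3]] := IH (fun m => U m /\ m i0 = N).
exists (B2 ++ B3); split.
  by move=> b; rewrite mem_cat => /orP [] ?; [apply: B2U|case: (B3U b)].
move=> m Um; rewrite ltnS leq_eqVlt => /orP [/eqP hN|hN].
  have [b bB hb] := HB3 m (conj Um hN); exists b; first by rewrite mem_cat bB orbT.
  move=> i; rewrite ltnS leq_eqVlt => /orP [/eqP ei|]; last exact: hb.
  have -> : i = i0 by apply: val_inj.
  by case: (B3U b bB) => _ ->; rewrite hN.
by have [b bB hb] := HB2 m Um hN; exists b => //; rewrite mem_cat bB.
Qed.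

Lemma dickson l (U : 'X_{1..l} -> Prop) :
  exists B : seq _, (forall b, b \in B -> U b) /\ (forall m, U m -> exists2 b, b \in B & (b <= m)%MM).
Proof.
have [B [BU HB]] := dickson_k l U; exists B; split => // m /HB [b bB hb].
by exists b => //; apply/mnm_lepP => i; apply: hb.
Qed.

Section WF.
Variable l : nat.
Variable le : rel 'X_{1..l}.
Hypothesis hto : term_order le.

Lemma to_min (P : 'X_{1..l} -> Prop) m0 : P m0 -> exists m, P m /\ forall m', P m' -> le m m'.
Proof.
move=> Pm0; have [B [BP HB]] := dickson P.
have [b0 b0B _] := HB m0 Pm0.
have tot : total (fun x y => le y x) by move=> x y; rewrite orbC (to_total hto).
have tr : transitive (fun x y => le y x) by move=> x y z h1 h2; apply: (to_trans hto) h2 h1.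
have [x xB hx] := @seq_max _ _ B tot tr ltac:(by case: (B) b0B).
exists x; split; first exact: BP.
move=> m' /HB [b bB hb]; apply: (to_trans hto) (hx _ bB) (to_div hto hb).
Qed.
End WF.

Local Open Scope ring_scope.

Section Ideal.
Variable l : nat.
Implicit Types f g r : {mpoly int[l]}.
Variable gens : seq {mpoly int[l]}.

Lemma in_ideal0 : in_ideal gens 0.
Proof. by exists (fun _ => 0); rewrite big1 // => i _; rewrite mul0r. Qed.

Lemma in_idealD f g : in_ideal gens f -> in_ideal gens g -> in_ideal gens (f + g).
Proof.
move=> [h ->] [h' ->]; exists (fun i => h i + h' i).
by rewrite -big_split; apply: eq_bigr => i _; rewrite mulrDl.
Qed.

Lemma in_idealM r f : in_ideal gens f -> in_ideal gens (r * f).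
Proof.
move=> [h ->]; exists (fun i => r * h i).
by rewrite mulr_sumr; apply: eq_bigr => i _; rewrite mulrA.
Qed.

Lemma in_idealN f : in_ideal gens f -> in_ideal gens (- f).
Proof. by move=> h; rewrite -mulN1r; apply: in_idealM. Qed.

Lemma in_idealB f g : in_ideal gens f -> in_ideal gens g -> in_ideal gens (f - g).
Proof. by move=> h1 h2; apply: in_idealD => //; apply: in_idealN. Qed.

Lemma in_idealZ c f : in_ideal gens f -> in_ideal gens (c *: f).
Proof. by rewrite -mul_mpolyC; apply: in_idealM. Qed.

Lemma in_ideal_mem g : g \in gens -> in_ideal gens g.
Proof.
move=> gin; rewrite -index_mem in gin.
exists (fun j => if j == Ordinal gin then 1 else 0).
rewrite (bigD1 (Ordinal gin)) //= eqxx mul1r big1 ?addr0.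
  by rewrite nth_index // -index_mem.
by move=> j /negbTE ->; rewrite mul0r.
Qed.

Lemma in_ideal_sub (G : seq {mpoly int[l]}) f :
  (forall g, g \in G -> in_ideal gens g) -> in_ideal G f -> in_ideal gens f.
Proof.
move=> HG [h ->]; elim/big_rec: _ => [|i x _ hx]; first exact: in_ideal0.
apply: in_idealD => //; apply: in_idealM; apply: HG; exact: mem_nth.
Qed.

End Ideal.

Section Supp.
Variable l : nat.
Variable le : rel 'X_{1..l}.
Hypothesis hto : term_order le.
Implicit Types f g : {mpoly int[l]}.

Definition all_le f m := forall m', m' \in msupp f -> le m' m.

Lemma all_leD f g m : all_le f m -> all_le g m -> all_le (f + g) m.
Proof. by move=> h1 h2 m' /msuppD_le; rewrite mem_cat => /orP [] ?; [apply: h1|apply: h2]. Qed.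

Lemma all_leN f m : all_le f m -> all_le (- f) m.
Proof. by move=> h m'; rewrite (perm_mem (msuppN f)); apply: h. Qed.

Lemma all_leB f g m : all_le f m -> all_le g m -> all_le (f - g) m.
Proof. by move=> h1 h2; apply: all_leD => //; apply: all_leN. Qed.

Lemma all_leZ c f m : all_le f m -> all_le (c *: f) m.
Proof. by move=> h m' /msuppZ_le; apply: h. Qed.

Lemma all_leMX f m d : all_le f m -> all_le (f * 'X_[d]) (m + d)%MM.
Proof.
move=> h m'; rewrite (perm_mem (msuppMX f d)) => /mapP [m2 m2s ->].
by rewrite addmC; apply: to_add => //; apply: h.
Qed.

Lemma lead_all_le f m : is_lead le f m -> all_le f m.
Proof. by case. Qed.

Lemma all_le_lead f m : all_le f m -> f@_m != 0 -> is_lead le f m.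
Proof. by move=> h nz; split => //; rewrite mcoeff_msupp. Qed.

Lemma lead_coef_nz f m : is_lead le f m -> f@_m != 0.
Proof. by case=> h _; rewrite -mcoeff_msupp. Qed.

Lemma mcoeffMX' f m d : (f * 'X_[d])@_(m + d)%MM = f@_m.
Proof. by rewrite addmC mcoeffMX. Qed.

Lemma all_le_lt f m : all_le f m -> f@_m = 0 -> f != 0 ->
  exists m', is_lead le f m' /\ le m' m /\ m' != m.
Proof.
move=> h c0 nz; have [m' hm'] := lead_exists hto nz.
exists m'; split => //; split; first by apply: h; case: hm'.
apply/eqP => e; move: (lead_coef_nz hm'); by rewrite e c0 eqxx.
Qed.

End Supp.

Local Open Scope ring_scope.

Definition pb (P : Prop) : bool := if excluded_middle_informative P then true else false.
Lemma pbP (P : Prop) : reflect P (pb P).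
Proof. by rewrite /pb; case: excluded_middle_informative => h; constructor. Qed.

Lemma collect (T U : eqType) (P : T -> U -> Prop) (s : seq T) :
  (forall x, x \in s -> exists g, P x g) ->
  exists G : seq U, (forall g, g \in G -> exists2 x, x \in s & P x g) /\
                    (forall x, x \in s -> exists2 g, g \in G & P x g).
Proof.
elim: s => [|x s IH] H; first by exists [::]; split.
have [G [H1 H2]] := IH (fun y ys => H y ltac:(by rewrite inE ys orbT)).
have [g Pg] := H x (mem_head _ _).
exists (g :: G); split.
  move=> g'; rewrite inE => /orP [/eqP ->|/H1 [y ys Py]]; first by exists x; rewrite ?mem_head.
  by exists y; rewrite // inE ys orbT.
move=> y; rewrite inE => /orP [/eqP ->|/H2 [g' g'G Pg']]; first by exists g; rewrite ?mem_head.
by exists g'; rewrite // inE g'G orbT.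
Qed.

Lemma minimize (T : eqType) (R : T -> T -> Prop) (s : seq T) :
  (forall x, x \in s -> R x x) -> (forall x y z, R x y -> R y z -> R x z) ->
  exists G : seq T, {subset G <= s} /\ (forall x, x \in s -> exists2 y, y \in G & R y x) /\
     (forall y y', y \in G -> y' \in G -> y != y' -> ~ R y y').
Proof.
move=> Hr Ht; elim: s Hr => [|x s IH] Hr; first by exists [::].
have [G [GS [GC GA]]] := IH (fun y ys => Hr y ltac:(by rewrite inE ys orbT)).
case: (classic (exists2 y, y \in G & R y x)) => [[y yG Ryx]|nx].
  exists G; split; first by move=> z /GS zs; rewrite inE zs orbT.
  split => //; move=> z; rewrite inE => /orP [/eqP ->|/GC]; first by exists y.
  done.
exists (x :: filter (fun y => ~~ pb (R x y)) G); split.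
  move=> z; rewrite inE => /orP [/eqP ->|]; first by rewrite mem_head.
  rewrite mem_filter => /andP [_ /GS zs].
  by rewrite inE zs orbT.
split.
  move=> z; rewrite inE => /orP [/eqP ->|/GC [y yG Ryz]].
    by exists x; [rewrite mem_head| apply: Hr; rewrite mem_head].
  case: (pbP (R x y)) => hxy.
    by exists x; [rewrite mem_head| apply: Ht hxy Ryz].
  by exists y => //; rewrite inE mem_filter yG; case: pbP => //= _; rewrite orbT.
move=> y y'; rewrite !inE !mem_filter.
move=> /orP [/eqP ->|/andP [/pbP nxy yG]] /orP [/eqP ->|/andP [/pbP nxy' y'G]] //.
- by rewrite eqxx.
- by move=> _ Ryx; apply: nx; exists y.
- exact: GA.
Qed.

Section GB.
Variable l : nat.
Variable le : rel 'X_{1..l}.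
Hypothesis hto : term_order le.
Variable gens : seq {mpoly int[l]}.
Local Notation Id := (in_ideal gens).

Definition LT m c := exists f, [/\ Id f, f != 0, is_lead le f m & f@_m = c].

Lemma LT_nz m c : LT m c -> c != 0.
Proof. by case=> f [_ _ hl <-]; apply: lead_coef_nz hl. Qed.

Lemma N0_exists (B0 : seq 'X_{1..l}) : (forall b, b \in B0 -> exists c, LT b c) ->
  exists N0 : nat, (0 < N0)%N /\ forall b, b \in B0 -> exists2 c, LT b c & (c %| N0%:Z)%Z.
Proof.
elim: B0 => [|b B IH] H; first by exists 1%N.
have [N [N0 HN]] := IH (fun y ys => H y ltac:(by rewrite inE ys orbT)).
have [c Lc] := H b (mem_head _ _).
have cnz := LT_nz Lc.
exists (`|c| * N)%N; split.
  by rewrite muln_gt0 N0 andbT absz_gt0.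
move=> y; rewrite inE => /orP [/eqP ->|/HN [c' Lc' hc']].
  by exists c => //; rewrite dvdzE /= dvdn_mulr.
by exists c' => //; move: hc'; rewrite !dvdzE /= => h; rewrite dvdn_mull.
Qed.

Lemma cover_exists : exists G0 : seq {mpoly int[l]},
  (forall g, g \in G0 -> g != 0 /\ Id g) /\
  (forall f, Id f -> f != 0 -> exists2 g, g \in G0 & LM_dvd le g f).
Proof.
pose U := fun m => exists c, LT m c.
have [B0 [B0U HB0]] := dickson U.
have [N0 [N0pos HN0]] := N0_exists B0U.
pose Ue := fun (e : nat) m => exists2 c, LT m c & (c %| e%:Z)%Z.
pose valid := fun g : {mpoly int[l]} => g != 0 /\ Id g.
pose cov := fun (e : nat) (Ge : seq {mpoly int[l]}) =>
  (forall g, g \in Ge -> valid g) /\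
  forall m, Ue e m -> exists2 g, g \in Ge & exists mg, [/\ is_lead le g mg, (mg <= m)%MM & (g@_mg %| e%:Z)%Z].
have Hcov : forall e, e \in divisors N0 -> exists Ge, cov e Ge.
  move=> e _; have [Be [BeU HBe]] := dickson (Ue e).
  have Hreq : forall b, b \in Be -> exists g, is_lead le g b /\ valid g /\ (g@_b %| e%:Z)%Z.
    by move=> b /BeU [c [f [h1 h2 h3 h4]] hc]; exists f; rewrite h4.
  have [Ge [GeH1 GeH2]] := collect Hreq.
  exists Ge; split.
    by move=> g /GeH1 [b _ [_ [h _]]].
  move=> m /HBe [b bB bm]; have [g gG [h1 [_ h3]]] := GeH2 b bB.
  by exists g => //; exists b; split.
have [Gs [GsH1 GsH2]] := collect Hcov.
exists (flatten Gs); split.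
  move=> g /flattenP [Ge GeGs gGe]; have [e _ [H1 _]] := GsH1 Ge GeGs; exact: H1.
move=> f If fnz.
have [m hm] := lead_exists hto fnz.
set c := f@_m.
have cnz : c != 0 by apply: lead_coef_nz hm.
have [b bB bm] := HB0 m (ex_intro _ c (ex_intro _ f (And4 If fnz hm erefl))).
have [cb [fb [Ifb fbnz hfb fbc]] cbN] := HN0 b bB.
pose h := fb * 'X_[m - b].
have mE : (b + (m - b))%MM = m by rewrite addmC submK.
have hle : all_le le h m by rewrite -mE; apply: all_leMX => //; apply: lead_all_le hfb.
have hc : h@_m = cb by rewrite -{1}mE mcoeffMX'.
have [u [v huv]] := Bezoutz c cb.
pose f2 := u *: f + v *: h.
have f2c : f2@_m = gcdz c cb by rewrite mcoeffD !mcoeffZ hc -huv.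
have dnz : gcdz c cb != 0 by rewrite gcdz_eq0 negb_and cnz.
have f2nz : f2 != 0 by apply/eqP => e; move: dnz; rewrite -f2c e mcoeff0 eqxx.
have If2 : Id f2.
  apply: in_idealD; apply: in_idealZ => //; rewrite /h mulrC; apply: in_idealM => //.
have lf2 : is_lead le f2 m.
  apply: all_le_lead; last by rewrite f2c.
  apply: all_leD; apply: all_leZ => //; apply: lead_all_le hm.
set e := gcdn `|c| `|cb|.
have ediv : e \in divisors N0.
  rewrite -dvdn_divisors // (dvdn_trans (dvdn_gcdr _ _)) //; by move: cbN; rewrite dvdzE.
have Uem : Ue e m.
  by exists (gcdz c cb); [exists f2; split|rewrite dvdzz].
have [Ge GeGs [_ HGe]] := GsH2 e ediv.
have [g gGe [mg [hg mgm hge]]] := HGe m Uem.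
exists g; first by apply/flattenP; exists Ge.
exists mg, m; split => //.
apply: dvdz_trans hge _; exact: dvdz_gcdl.
Qed.

Lemma LM_dvd_trans f g h : LM_dvd le f g -> LM_dvd le g h -> LM_dvd le f h.
Proof.
move=> [m1 [m2 [h1 h2 d1 l1]]] [m3 [m4 [h3 h4 d2 l2]]].
have e := lead_uniq hto h2 h3; subst m3.
exists m1, m4; split => //; [exact: dvdz_trans d1 d2| exact: lepm_trans l1 l2].
Qed.

Lemma LM_dvd_refl f : f != 0 -> LM_dvd le f f.
Proof. move=> /(lead_exists hto) [m hm]; exists m, m; split; rewrite ?dvdzz ?lepm_refl //; exact: lepm_refl. Qed.

Lemma GB_exists : exists G, min_strong_GB le gens G.
Proof.
have [G0 [G0v G0c]] := cover_exists.
have [G [GS [GC GA]]] := @minimize _ (LM_dvd le) G0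
  (fun x xs => LM_dvd_refl (proj1 (G0v x xs))) LM_dvd_trans.
have Gv : forall g, g \in G -> g != 0 /\ Id g by move=> g /GS; apply: G0v.
have Gc : forall f, Id f -> f != 0 -> exists2 g, g \in G & LM_dvd le g f.
  move=> f If fnz; have [g0 g0G hg0] := G0c f If fnz.
  have [g gG hg] := GC g0 g0G; exists g => //; exact: LM_dvd_trans hg hg0.
exists G; split => //.
move=> f If; apply: NNPP => nf.
pose P := fun m => exists f, [/\ Id f, ~ in_ideal G f & is_lead le f m].
have fnz : f != 0 by apply/eqP => e; apply: nf; rewrite e; apply: in_ideal0.
have [m0 hm0] := lead_exists hto fnz.
have [m [[f1 [If1 nf1 hf1]] mmin]] := to_min hto (ex_intro _ f (And3 If nf hm0) : P m0).
have f1nz : f1 != 0 by apply/eqP => e; apply: nf1; rewrite e; apply: in_ideal0.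
have [g gG [mg [mf [hg hf dv mgm]]]] := Gc f1 If1 f1nz.
have e := lead_uniq hto hf hf1; subst mf.
pose q := (f1@_m %/ g@_mg)%Z.
pose h := g * 'X_[m - mg].
have mE : (mg + (m - mg))%MM = m by rewrite addmC submK.
pose f' := f1 - q *: h.
have Ih : Id h by rewrite /h mulrC; apply: in_idealM; case: (Gv g gG).
have nf' : ~ in_ideal G f'.
  move=> h'; apply: nf1; have -> : f1 = f' + q *: h by rewrite /f' subrK.
  apply: in_idealD => //; apply: in_idealZ; rewrite /h mulrC; apply: in_idealM.
  exact: in_ideal_mem.
have f'nz : f' != 0 by apply/eqP => e; apply: nf'; rewrite e; apply: in_ideal0.
have f'le : all_le le f' m.
  apply: all_leB; first exact: lead_all_le hf1.
  by apply: all_leZ; rewrite -mE; apply: all_leMX => //; apply: lead_all_le hg.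
have f'c : f'@_m = 0.
  rewrite mcoeffB mcoeffZ -{2}mE mcoeffMX' /q divzK // subrr //.
have [m' [hm' [lm' nm']]] := all_le_lt hto f'le f'c f'nz.
have := mmin m' (ex_intro _ f' (And3 (in_idealB If1 (in_idealZ q Ih)) nf' hm')).
move=> lm; case/negP: nm'; apply/eqP; apply: (to_anti hto); by rewrite lm lm'.
Qed.

End GB.

Local Open Scope ring_scope.

Section Lin.
Variable l : nat.
Variable R : comRingType.
Implicit Types w : 'I_l -> R.

Definition lin w : {mpoly R[l]} := \sum_(j < l) w j *: 'X_j.

Lemma mcoeff_lin w m : (lin w)@_m = \sum_(j < l) w j * (U_(j)%MM == m)%:R.
Proof.
rewrite /lin raddf_sum /=; apply: eq_bigr => j _; by rewrite mcoeffZ mcoeffX.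
Qed.

Lemma mcoeff_linU w k : (lin w)@_U_(k) = w k.
Proof.
rewrite mcoeff_lin (bigD1 k) //= eqxx mulr1 big1 ?addr0 //.
by move=> j /negbTE hj; rewrite eq_mnm1 hj mulr0.
Qed.

Lemma msupp_lin w m : m \in msupp (lin w) -> exists2 k, m = U_(k)%MM & w k != 0.
Proof.
rewrite mcoeff_msupp => h.
case: (pickP (fun j : 'I_l => U_(j)%MM == m)) => [k /eqP hk|hn].
  by exists k => //; move: h; rewrite -hk mcoeff_linU.
by move: h; rewrite mcoeff_lin big1 ?eqxx // => j _; rewrite hn mulr0.
Qed.

Lemma lin_comb u v w1 w2 : lin (fun k => u * w1 k + v * w2 k) = u *: lin w1 + v *: lin w2.
Proof.
rewrite /lin !scaler_sumr -big_split; apply: eq_bigr => j _.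
by rewrite scalerDl !scalerA.
Qed.

Lemma lin_scale u w : lin (fun k => u * w k) = u *: lin w.
Proof. rewrite /lin scaler_sumr; apply: eq_bigr => j _; by rewrite scalerA. Qed.

Lemma lin_eq0 w : lin w = 0 -> forall k, w k = 0.
Proof. by move=> h k; rewrite -mcoeff_linU h mcoeff0. Qed.

Lemma lin_coef w : lin (fun k => (lin w)@_U_(k)) = lin w.
Proof. by apply: eq_bigr => j _; rewrite mcoeff_linU. Qed.

Lemma mcoeffMXg (h : {mpoly R[l]}) d m :
  (h * 'X_[d])@_m = if (d <= m)%MM then h@_(m - d)%MM else 0.
Proof.
case: ifP => hd; first by rewrite -{1}(submK hd) addmC mcoeffMX.
apply/eqP; rewrite mcoeff_eq0; apply/negP.
rewrite (perm_mem (msuppMX h d)) => /mapP [m' _ e].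
by move: hd; rewrite e lem_addr.
Qed.

Lemma mcoeffM_lin0 (h : {mpoly R[l]}) w : (h * lin w)@_0%MM = 0.
Proof.
rewrite /lin mulr_sumr !raddf_sum /=.
rewrite big1 // => j _; rewrite -scalerAr mcoeffZ mcoeffMXg.
case: ifP; last by rewrite mulr0.
by move/mnm_lepP => /(_ j); rewrite mnm1E eqxx mnm0E.
Qed.

Lemma mcoeffM_linU (h : {mpoly R[l]}) w k : (h * lin w)@_U_(k) = h@_0%MM * w k.
Proof.
rewrite /lin mulr_sumr !raddf_sum /=.
rewrite (bigD1 k) //= big1 ?addr0.
  by rewrite -scalerAr mcoeffZ mcoeffMXg lepm_refl mulrC; congr (_ * _); congr (_@__); apply/mnmP => i; rewrite mnmBE subnn mnm0E.
move=> j /negbTE hj; rewrite -scalerAr mcoeffZ mcoeffMXg.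
case: ifP; last by rewrite mulr0.
by move/mnm_lepP => /(_ j); rewrite !mnm1E eqxx eq_sym hj.
Qed.

End Lin.

Local Open Scope ring_scope.

Section Core.
Variable l : nat.
Variable le : rel 'X_{1..l}.
Hypothesis hto : term_order le.
Variable gens : seq {mpoly int[l]}.
Hypothesis GL : forall r : nat, exists w, gens`_r = lin w.

Definition ZS (F : {mpoly int[l]}) := exists c : 'I_(size gens) -> int, F = \sum_r c r *: gens`_r.

Lemma ZS0 : ZS 0.
Proof. by exists (fun _ => 0); rewrite big1 // => r _; rewrite scale0r. Qed.

Lemma ZSD F1 F2 : ZS F1 -> ZS F2 -> ZS (F1 + F2).
Proof.
move=> [c1 ->] [c2 ->]; exists (fun r => c1 r + c2 r).
by rewrite -big_split; apply: eq_bigr => r _; rewrite scalerDl.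
Qed.

Lemma ZSZ u F : ZS F -> ZS (u *: F).
Proof.
move=> [c ->]; exists (fun r => u * c r).
by rewrite scaler_sumr; apply: eq_bigr => r _; rewrite scalerA.
Qed.

Lemma ZSB F1 F2 : ZS F1 -> ZS F2 -> ZS (F1 - F2).
Proof. by move=> h1 h2; apply: ZSD => //; rewrite -scaleN1r; apply: ZSZ. Qed.

Lemma ZS_ideal F : ZS F -> in_ideal gens F.
Proof.
move=> [c ->]; exists (fun r => (c r)%:MP).
by apply: eq_bigr => r _; rewrite mul_mpolyC.
Qed.

Lemma coefM_gen0 r (h : {mpoly int[l]}) : (h * gens`_r)@_0%MM = 0.
Proof. by have [w ->] := GL r; rewrite mcoeffM_lin0. Qed.

Lemma coefM_genU r (h : {mpoly int[l]}) k :
  (h * gens`_r)@_U_(k) = h@_0%MM * (gens`_r)@_U_(k).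
Proof. by have [w ->] := GL r; rewrite mcoeffM_linU mcoeff_linU. Qed.

Definition isLin (F : {mpoly int[l]}) := exists w, F = lin w.

Lemma isLin_coef F : isLin F -> lin (fun k => F@_U_(k)) = F.
Proof. by move=> [w ->]; apply: lin_coef. Qed.

Lemma ideal_coef f : in_ideal gens f ->
  f@_0%MM = 0 /\ ZS (lin (fun k => f@_U_(k))).
Proof.
move=> [h ->]; split.
  by rewrite raddf_sum /= big1 // => r _; rewrite coefM_gen0.
pose c := fun r : 'I_(size gens) => (h r)@_0%MM.
pose S := \sum_r c r *: gens`_r.
have LS : isLin S.
  rewrite /S; elim/big_rec: _ => [|r x _ [w' hx]].
    by exists (fun _ => 0); rewrite /lin big1 // => j _; rewrite scale0r.
  have [w hw] := GL r; exists (fun k => c r * w k + 1 * w' k).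
  by rewrite lin_comb scale1r hw hx.
have coefS : forall k, S@_U_(k) = (\sum_r h r * gens`_r)@_U_(k).
  move=> k; rewrite !raddf_sum /=; apply: eq_bigr => r _.
  by rewrite mcoeffZ coefM_genU.
exists c; rewrite -/S -(isLin_coef LS); apply: eq_bigr => j _; by rewrite coefS.
Qed.


Lemma le_U (m : 'X_{1..l}) k : (m <= U_(k))%MM -> m = 0%MM \/ m = U_(k)%MM.
Proof.
move/mnm_lepP => h.
case: (m k =P 0%N) => hk; [left|right]; apply/mnmP => i; rewrite ?mnm0E ?mnm1E.
  have := h i; rewrite mnm1E; case: eqP => [<-|_]; first by rewrite hk.
  by rewrite leqn0 => /eqP.
have := h i; rewrite mnm1E; case: eqP => [<-|_].
  by move: hk; case: (m k) => [|[|]].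
by rewrite leqn0 => /eqP.
Qed.

Lemma core (G : seq {mpoly int[l]}) (p : nat) (w0 : 'I_l -> int) :
  min_strong_GB le gens G -> prime p ->
  ZS (lin (fun k => p%:Z * w0 k)) -> ~ ZS (lin w0) ->
  exists2 g, g \in G & exists m, is_lead le g m /\ (p%:Z %| g@_m)%Z.
Proof.
move=> [G1 _ G3 _] pp Zp0 nZ0; apply: NNPP => H.
have Hn : forall g m, g \in G -> is_lead le g m -> ~ (p%:Z %| g@_m)%Z.
  by move=> g m gG hg hd; apply: H; exists g => //; exists m.
pose P := fun m => exists w, [/\ ZS (lin (fun k => p%:Z * w k)), ~ ZS (lin w) & is_lead le (lin w) m].
have lnz : forall w, ~ ZS (lin w) -> lin w != 0.
  by move=> w nz; apply/eqP => e; apply: nz; rewrite e; apply: ZS0.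
have [m00 hm00] := lead_exists hto (lnz _ nZ0).
have [m [[w [Zpw nZw hw]] mmin]] := to_min hto (ex_intro _ w0 (And3 Zp0 nZ0 hm00) : P m00).
have [k mk wk] := msupp_lin (proj1 hw); subst m.
set f := lin (fun k => p%:Z * w k).
have fE : f = p%:Z *: lin w by rewrite /f lin_scale.
have pnz : p%:Z != 0 by rewrite eqz_nat -lt0n prime_gt0.
have hf : is_lead le f U_(k).
  apply: all_le_lead; first by rewrite fE; apply: all_leZ; apply: lead_all_le hw.
  by rewrite /f mcoeff_linU mulf_neq0.
have fnz : f != 0 by apply/eqP => e; move: (lead_coef_nz hf); rewrite e mcoeff0 eqxx.
have [g gG [mg [mf [hg hf' dv mgm]]]] := G3 f (ZS_ideal Zpw) fnz.
have e := lead_uniq hto hf' hf; subst mf.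
have [gnz Ig] := G1 g gG.
have [g0 Zg] := ideal_coef Ig.
have emg : mg = U_(k)%MM.
  case: (le_U mgm) => // e; move: (lead_coef_nz hg); by rewrite e g0 eqxx.
subst mg.
have ndv := Hn g _ gG hg.
set v := fun k' => g@_U_(k').
have vk : v k != 0 by apply: lead_coef_nz hg.
have dvw : (v k %| w k)%Z.
  move: dv ndv; rewrite /f mcoeff_linU !dvdzE abszM /= => dv ndv.
  by rewrite /v -(@Gauss_dvdr _ p) // coprime_sym prime_coprime //; apply/negP.
pose q := (w k %/ v k)%Z.
pose w' := fun k' => 1 * w k' + (- q) * v k'.
have w'k : w' k = 0 by rewrite /w' mul1r mulNr divzK // subrr.
have linw' : lin w' = lin w - q *: lin v by rewrite /w' lin_comb scale1r scaleNr.
have Zpw' : ZS (lin (fun k' => p%:Z * w' k')).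
  rewrite lin_scale linw' scalerBr scalerA; apply: ZSB; first by rewrite -lin_scale.
  by apply: ZSZ.
have nZw' : ~ ZS (lin w').
  move=> hZ; apply: nZw; have -> : lin w = lin w' + q *: lin v by rewrite linw' subrK.
  by apply: ZSD => //; apply: ZSZ.
have [m' hm'] := lead_exists hto (lnz _ nZw').
have [k' mk' wk'] := msupp_lin (proj1 hm'); subst m'.
have kk : k' != k by apply/eqP => e; move: wk'; rewrite e w'k eqxx.
have l1 := mmin _ (ex_intro _ w' (And3 Zpw' nZw' hm')).
have l2 : le U_(k')%MM U_(k)%MM.
  case: (w k' =P 0) => hwk.
    have vk' : v k' != 0 by apply/eqP => e; move: wk'; rewrite /w' hwk e !mulr0 addr0 eqxx.
    by case: hg => _; apply; rewrite mcoeff_msupp.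
  by case: hw => _; apply; rewrite mcoeff_msupp mcoeff_linU; apply/eqP.
move: kk; rewrite -eq_mnm1 => /eqP; apply; apply: (to_anti hto); by rewrite l1 l2.
Qed.

End Core.

Local Open Scope ring_scope.

Lemma arith1 a b : (0 < a)%N -> (0 < b)%N -> 1%N = ((a + a).-1 + b).-1 -> (a <= 1)%N.
Proof. lia. Qed.
Lemma arith2 a : 2%N = (a + 2).-1 -> (a <= 1)%N.
Proof. lia. Qed.

Section Field.
Variable l : nat.
Variable F : fieldType.
Implicit Types f g h : {mpoly F[l]}.

Definition dvdm (L f : {mpoly F[l]}) := exists h, f = h * L.
Definition linprime (L : {mpoly F[l]}) := L != 0 /\
  forall f g, dvdm L (f * g) -> dvdm L f \/ dvdm L g.

Lemma lin_prime (c : 'I_l -> F) k : c k != 0 -> linprime (lin c).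
Proof.
move=> ck.
set L := lin c.
pose t := [tuple ('X_j - (if j == k then (c k)^-1 *: L else 0)) | j < l].

have phiX : forall j, (comp_mpoly t) 'X_j = 'X_j - (if j == k then (c k)^-1 *: L else 0).
  move=> j; have := @comp_mpolyXU l F l j t. move=> ->. rewrite -tnth_nth tnth_mktuple. by [].
have phiL : (comp_mpoly t) L = 0.
  rewrite {1}/L /lin raddf_sum /=.
  under eq_bigr => j _ do rewrite comp_mpolyZ phiX scalerBr.
  rewrite sumrB [X in _ - X](bigD1 k) //= [X in _ - (_ + X)]big1 ?addr0; last by move=> j hj; rewrite (negbTE hj) scaler0.
  by rewrite eqxx scalerA mulfV // scale1r -/(lin c) subrr.
pose D := fun f => exists h, f - (comp_mpoly t) f = h * L.
have D_add : forall f g, D f -> D g -> D (f + g).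
  move=> f g [h1 e1] [h2 e2]; exists (h1 + h2).
  by rewrite rmorphD /= opprD addrACA e1 e2 mulrDl.
have D_scale : forall a f, D f -> D (a *: f).
  move=> a f [h1 e1]; exists (a *: h1).
  by rewrite comp_mpolyZ -scalerBr e1 scalerAl.
have D_mul : forall f g, D f -> D g -> D (f * g).
  move=> f g [h1 e1] [h2 e2]; exists (h1 * g + (comp_mpoly t) f * h2).
  rewrite rmorphM /=.
  have -> : f * g - (comp_mpoly t) f * (comp_mpoly t) g = (f - (comp_mpoly t) f) * g + (comp_mpoly t) f * (g - (comp_mpoly t) g).
    by rewrite mulrBl mulrBr addrA subrK.
  by rewrite e1 e2 mulrDl -!mulrA [g * L]mulrC.
have D_1 : D 1 by exists 0; rewrite rmorph1 subrr mul0r.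
have D_X : forall j, D 'X_j.
  move=> j; exists (if j == k then ((c k)^-1)%:MP else 0).
  rewrite phiX opprB addrC subrK; case: (j == k); last by rewrite mul0r.
  by rewrite mul_mpolyC.
have D_all : forall f, D f.
  elim/mpolyind => [|a m f _ _ Df]; first by exists 0; rewrite raddf0 subr0 mul0r.
  apply: D_add => //; apply: D_scale.
  rewrite mpolyXE_id; apply: (big_ind D) => // i _.
  elim: (m i) => [|e IH]; first by rewrite expr0.
  by rewrite exprS; apply: D_mul.
have Lnz : L != 0.
  by apply/eqP => e; move: ck; rewrite -(mcoeff_linU c k) -/L e mcoeff0 eqxx.
split => // f g [h e].
have : (comp_mpoly t) f * (comp_mpoly t) g = 0 by rewrite -rmorphM /= e rmorphM /= phiL mulr0.
move/eqP; rewrite mulf_eq0 => /orP [] /eqP h0.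
  by left; have [h' e'] := D_all f; exists h'; rewrite -e' h0 subr0.
by right; have [h' e'] := D_all g; exists h'; rewrite -e' h0 subr0.
Qed.


Lemma msize_nz (f : {mpoly F[l]}) : f != 0 -> (0 < msize f)%N.
Proof. by move=> nz; rewrite lt0n msize_poly_eq0. Qed.

Lemma prime_prod (P0 : {mpoly F[l]}) : linprime P0 -> msize P0 = 2%N ->
  forall n (M : 'I_n -> {mpoly F[l]}), dvdm P0 (\prod_(i < n) M i) -> exists i, dvdm P0 (M i).
Proof.
move=> [P0nz Pp] P02; elim => [|n IH] M.
  rewrite big_ord0 => -[h e].
  have hnz : h != 0 by apply/eqP => e'; move: e; rewrite e' mul0r => /eqP; rewrite oner_eq0.
  have := congr1 (fun q => msize q) e; rewrite msizeM // msize1 P02 addn2 /=.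
  by move=> [] /esym /eqP; rewrite msize_poly_eq0 (negbTE hnz).
rewrite big_ord_recl => /Pp [h|/IH [i hi]]; first by exists ord0.
by exists (lift ord0 i).
Qed.

Lemma sq n : forall (L : 'I_n -> {mpoly F[l]}), (forall i, linprime (L i) /\ msize (L i) = 2%N) ->
  forall g h, \prod_(i < n) L i = g * g * h ->
  (msize g <= 1)%N \/ exists i j, i != j /\ exists c, L i = c%:MP * L j.
Proof.
elim: n => [|n IH] L HL g h.
  rewrite big_ord0 => e.
  have gnz : g != 0 by apply/eqP => e'; move: e; rewrite e' !mul0r => /eqP; rewrite oner_eq0.
  have hnz : h != 0 by apply/eqP => e'; move: e; rewrite e' !mulr0 => /eqP; rewrite oner_eq0.
  have := congr1 (fun q => msize q) e; rewrite !msizeM ?mulf_neq0 // msize1.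
  move=> H; left; apply: (arith1 _ _ H); exact: msize_nz.
rewrite big_ord_recl => e.
have [[L0nz Lp] L02] := HL ord0.
set P := \prod_(i < n) L (lift ord0 i) in e.
have HL' : forall i, linprime (L (lift ord0 i)) /\ msize (L (lift ord0 i)) = 2%N by move=> i; apply: HL.
have d0 : dvdm (L ord0) (g * (g * h)) by exists P; rewrite mulrA -e mulrC.
have [[g' eg]|[h' eh]] : dvdm (L ord0) g \/ dvdm (L ord0) h.
    case: (Lp _ _ d0) => [|/Lp []]; by [left|left|right].
  have dP : dvdm (L ord0) P.
    exists (g' * g' * h); apply: (mulfI L0nz); rewrite e eg.
    by ring.
  have [i [q eq]] := prime_prod (conj L0nz Lp) L02 dP.
  have qnz : q != 0 by apply/eqP => e'; have := (HL (lift ord0 i)).1.1; rewrite eq e' mul0r eqxx.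
  have := congr1 (fun q => msize q) eq; rewrite msizeM // (HL (lift ord0 i)).2 L02 => hq.
  have q1 : (msize q <= 1)%N by apply: arith2.
  right; exists (lift ord0 i), ord0; split; first by rewrite eq_sym neq_lift.
  by exists q@_0%MM; rewrite eq -msize1_polyC.
have eP : P = g * g * h'.
  apply: (mulfI L0nz); rewrite e eh.
  by ring.
case: (IH _ HL' _ _ eP) => [|[i [j [ij [c ec]]]]]; first by left.
right; exists (lift ord0 i), (lift ord0 j); split; last by exists c.
by apply: contra ij => /eqP /lift_inj ->.
Qed.

End Field.

Local Open Scope ring_scope.

Lemma det2 (R : comRingType) (A : 'M[R]_2) : \det A = A 0 0 * A 1 1 - A 0 1 * A 1 0.
Proof.
rewrite (expand_det_row _ 0) !big_ord_recl big_ord0 /cofactor !det_mx11 !mxE /=.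
rewrite addr0 expr0 mul1r expr1 !mulN1r.
have e1 : lift 0 (0 : 'I_1) = 1 :> 'I_2 by apply: val_inj.
have e2 : lift ord0 (ord0 : 'I_1) = 1 :> 'I_2 by apply: val_inj.
have e3 : lift (lift ord0 (ord0 : 'I_1)) (0 : 'I_1) = 0 :> 'I_2 by apply: val_inj.
have e4 : (ord0 : 'I_2) = 0 by apply: val_inj.
by rewrite e3 e1 ?e2 ?e4 mulrN.
Qed.

Lemma sum_deltal (R : nzRingType) m (F : 'I_m -> R) k0 : \sum_(k < m) (k == k0)%:R * F k = F k0.
Proof.
rewrite (bigD1 k0) //= eqxx mul1r big1 ?addr0 // => k hk.
by rewrite (negbTE hk) mul0r.
Qed.

Lemma sum_deltar (R : nzRingType) m (F : 'I_m -> R) k0 : \sum_(k < m) F k * (k == k0)%:R = F k0.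
Proof.
rewrite (bigD1 k0) //= eqxx mulr1 big1 ?addr0 // => k hk.
by rewrite (negbTE hk) mulr0.
Qed.

Section Arr.
Variables (l n : nat) (a : 'I_n -> 'I_l -> int).
Hypothesis harr : arrangement a.

Lemma arr_nz i : exists j, a i j != 0. Proof. by case: harr => h _ _ _; apply: h. Qed.
Lemma arr_prim i p : prime p -> exists j, ~~ (p%:Z %| a i j)%Z.
Proof. by case: harr => _ h _ _; apply: h. Qed.
Lemma arr_dist i i' : i != i' -> ~ (hyp a i =i hyp a i').
Proof. by case: harr => _ _ h _; apply: h. Qed.

Lemma arr_ind i j : i != j -> forall u v : int,
  (forall k, u * a i k + v * a j k = 0) -> u = 0 /\ v = 0.
Proof.
move=> ij u v H.
have [k0 hk0] := arr_nz j.
suff u0 : u = 0.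
  split => //; have := H k0; rewrite u0 mul0r add0r => /eqP.
  by rewrite mulf_eq0 (negbTE hk0) orbF => /eqP.
apply: NNPP => /eqP unz.
have [k1 hk1] := arr_nz i.
have vnz : v != 0.
  apply/eqP => v0; have := H k1; rewrite v0 mul0r addr0 => /eqP.
  by rewrite mulf_eq0 (negbTE unz) (negbTE hk1).
have key : (u%:~R : rat) *: col i (arr_mx a) = - (v%:~R : rat) *: col j (arr_mx a).
  apply/matrixP => k c; rewrite !mxE mulNr -!intrM -intrN; congr (_%:~R).
  by apply/eqP; rewrite -subr_eq0 opprK H.
have unz' : (u%:~R : rat) != 0 by rewrite intr_eq0.
have vnz' : (- (v%:~R : rat)) != 0 by rewrite oppr_eq0 intr_eq0.
apply: (arr_dist ij) => x; rewrite /hyp !inE /=.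
have E : forall (c : rat) (M : 'M[rat]_(1,1)), c != 0 -> (M == 0) = (c *: M == 0).
  by move=> c M cnz; rewrite scaler_eq0 (negbTE cnz).
by rewrite (E _ (x *m col i (arr_mx a)) unz') scalemxAr key -scalemxAr scaler_eq0 (negbTE vnz').
Qed.

Lemma arr_minor i j : i != j -> exists k1 k2, a i k1 * a j k2 - a j k1 * a i k2 != 0.
Proof.
move=> ij; apply: NNPP => H.
have [k0 hk0] := arr_nz j.
have := @arr_ind i j ij (a j k0) (- a i k0).
case.
  move=> k; apply: NNPP => hk; apply: H; exists k, k0; apply/eqP => e; apply: hk.
  by rewrite mulNr -e; ring.
by move=> e _; move: hk0; rewrite e eqxx.
Qed.


Lemma arr_codim i j : i != j -> codim_int a [set i; j] = 2%N.
Proof.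
move=> ij; rewrite /codim_int mxrank_ker subKn ?rank_leq_row //.
set A := arr_mxS a [set i; j].
apply/eqP; rewrite eqn_leq; apply/andP; split.
  pose X : 'M[rat]_(l, 2) := \matrix_(k, r) (if r == 0 then (a i k)%:~R else (a j k)%:~R).
  pose Y : 'M[rat]_(2, n) := \matrix_(r, c) (if r == 0 then (c == i)%:R else (c == j)%:R).
  have -> : A = X *m Y.
    apply/matrixP => k c; rewrite !mxE big_ord_recl big_ord_recl big_ord0 !mxE /=.
    rewrite in_set2; case: (c =P i) => [->|ci].
      by rewrite /= (negbTE ij) /= mulr0 mulr1 !addr0.
    case: (c =P j) => [->|cj] /=; first by rewrite mulr0 mulr1 add0r addr0.
    by rewrite !mulr0 !addr0.
  by apply: leq_trans (mxrankM_maxr _ _) (rank_leq_row _).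
have [k1 [k2 hk]] := arr_minor ij.
pose C1 : 'M[rat]_(n, 2) := \matrix_(c, s) (c == (if s == 0 then i else j))%:R.
pose R1 : 'M[rat]_(2, l) := \matrix_(r, k) (k == (if r == 0 then k1 else k2))%:R.
pose M := R1 *m (A *m C1).
have ME : forall r s, M r s = A (if r == 0 then k1 else k2) (if s == 0 then i else j).
  move=> r s; rewrite /M /R1 /C1 !mxE.
  under eq_bigr => k _ do rewrite !mxE.
  under eq_bigr => k _ do (under eq_bigr => c _ do rewrite !mxE).
  under eq_bigr => k _ do rewrite sum_deltar.
  by rewrite sum_deltal.
have Mu : M \in unitmx.
  rewrite unitmxE unitfE det2 !ME /= /A !mxE !in_set2 !eqxx !orbT !orTb.
  rewrite -!intrM -intrB intr_eq0.
  by [].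
apply: leq_trans (mxrankM_maxl _ _).
rewrite -(mxrank_unit Mu).
exact: mxrankM_maxr.
Qed.

End Arr.

Local Open Scope ring_scope.

Lemma Fp_int0 p (pp : prime p) (z : int) : ((z%:~R : 'F_p) == 0) = (p%:Z %| z)%Z.
Proof.
have H : forall m : nat, ((m%:R : 'F_p) == 0) = (p %| m)%N.
  move=> m; rewrite -(inj_eq val_inj) /= val_Fp_nat //.
rewrite dvdzE /=; case: z => m.
  by rewrite -H.
by rewrite NegzE mulrNz oppr_eq0 -H /=.
Qed.

Lemma Fp_lift p (pp : prime p) (c : 'F_p) : ((val c)%:R : 'F_p) = c.
Proof.
apply: val_inj; rewrite /= val_Fp_nat // modn_small //.
move: (ltn_ord c); rewrite [X in (_ < X)%N -> _]Fp_cast //.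
Qed.

Lemma msize_lin l (R : comRingType) (c : 'I_l -> R) k : c k != 0 -> msize (lin c) = 2%N.
Proof.
move=> ck; apply/eqP; rewrite eqn_leq; apply/andP; split.
  rewrite msizeE; apply/bigmax_leqP_seq => m /msupp_lin [k' -> _] _; by rewrite mdeg1.
have : U_(k)%MM \in msupp (lin c) by rewrite mcoeff_msupp mcoeff_linU.
by move/msize_mdeg_lt; rewrite mdeg1.
Qed.

Section Gens.
Variables (l n : nat) (a : 'I_n -> 'I_l -> int) (i j : 'I_n).
Local Notation gens := [seq alpha a x | x in [set i; j]].

Lemma gens_mem g : g \in gens -> exists2 x, x \in [set i; j] & g = alpha a x.
Proof. by move/mapP => [x]; rewrite mem_enum => xS ->; exists x. Qed.

Lemma gens_GL : forall r : nat, exists w, gens`_r = lin w.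
Proof.
move=> r; case: (ltnP r (size gens)) => hr.
  by have [x _ ->] := gens_mem (mem_nth 0 hr); exists (a x).
exists (fun _ => 0); rewrite nth_default // /lin big1 // => k _; by rewrite scale0r.
Qed.

Lemma alpha_in_gens x : x \in [set i; j] -> alpha a x \in gens.
Proof. by move=> xS; apply: map_f; rewrite mem_enum. Qed.

Lemma ZS_mem g : g \in gens -> ZS gens g.
Proof.
move=> gin; rewrite -index_mem in gin.
exists (fun r => if r == Ordinal gin then 1 else 0).
rewrite (bigD1 (Ordinal gin)) //= eqxx scale1r big1 ?addr0.
  by rewrite nth_index // -index_mem.
by move=> r /negbTE ->; rewrite scale0r.
Qed.

Lemma ZS_two F : ZS gens F -> exists u v, F = u *: alpha a i + v *: alpha a j.
Proof.
move=> [c ->]; elim/big_rec: _ => [|r x _ [u [v ->]]].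
  by exists 0, 0; rewrite !scale0r addr0.
have := gens_mem (mem_nth 0 (ltn_ord r)).
move=> [y]; rewrite in_set2 => /orP [] /eqP -> ->.
  by exists (c r + u), v; rewrite scalerDl addrA.
by exists u, (c r + v); rewrite scalerDl addrCA addrA.
Qed.

End Gens.

Theorem theorem6p3 (l n : nat) (a : 'I_n -> 'I_l -> int) (le : rel 'X_{1..l}) (p : nat) :
  arrangement a -> term_order le -> prime p ->
  k_lucky a le 2 p -> good a p.
Proof.
move=> harr hto pp hl g h e.
rewrite /defpoly rmorph_prod /= in e.
have Lm : forall i, map_mpoly (fun z : int => (z%:~R : 'F_p)) (alpha a i) =
    lin (fun k => ((a i k)%:~R : 'F_p)).
  move=> i; rewrite /alpha raddf_sum /=; apply: eq_bigr => k _.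
  by rewrite map_mpolyZ map_mpolyX.
rewrite (eq_bigr _ (fun i _ => Lm i)) in e.
have HL : forall i, linprime (lin (fun k => ((a i k)%:~R : 'F_p))) /\
     msize (lin (fun k => ((a i k)%:~R : 'F_p))) = 2%N.
  move=> i; have [k hk] := arr_prim harr i pp.
  have hk' : ((a i k)%:~R : 'F_p) != 0 by rewrite Fp_int0.
  by split; [apply: (lin_prime hk')|apply: (msize_lin hk')].
case: (sq HL e) => // [[i [j [ij [c ec]]]]].
exfalso.
have hc : forall k, ((a i k)%:~R : 'F_p) = c * (a j k)%:~R.
  by move=> k; have := congr1 (fun q => q@_U_(k)%MM) ec; rewrite /= mcoeffCM !mcoeff_linU.
pose cn := val c.
pose z := fun k => a i k - cn%:Z * a j k.
have hz : forall k, (p%:Z %| z k)%Z.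
  move=> k; rewrite -Fp_int0 // /z rmorphB rmorphM /= hc.
  have -> : ((cn%:Z)%:~R : 'F_p) = c by rewrite -(Fp_lift pp c).
  by rewrite subrr.
pose w := fun k => (z k %/ p%:Z)%Z.
have hw : forall k, p%:Z * w k = z k by move=> k; rewrite mulrC divzK.
pose gens := [seq alpha a x | x in [set i; j]].
have Zpw : ZS gens (lin (fun k => p%:Z * w k)).
  have -> : lin (fun k => p%:Z * w k) = lin (fun k => 1 * a i k + (- cn%:Z) * a j k).
    by apply: eq_bigr => k _; rewrite hw /z mul1r mulNr.
  rewrite lin_comb; apply: ZSD; apply: ZSZ; apply: ZS_mem; apply: alpha_in_gens;
    by rewrite in_set2 eqxx ?orbT.
have nZw : ~ ZS gens (lin w).
  move=> /ZS_two [u [v ew]].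
  have hk : forall k, w k = u * a i k + v * a j k.
    by move=> k; have := congr1 (fun q => q@_U_(k)%MM) ew; rewrite /= mcoeffD !mcoeffZ !mcoeff_linU.
  have := @arr_ind l n a harr i j ij (p%:Z * u - 1) (p%:Z * v + cn%:Z).
  case.
    move=> k; transitivity (p%:Z * (u * a i k + v * a j k) - (a i k - cn%:Z * a j k)); first by ring.
    by rewrite -hk hw subrr.
  move=> /eqP; rewrite subr_eq0 => /eqP e1 _.
  have := congr1 absz e1; rewrite abszM /= => /eqP; rewrite muln_eq1 => /andP [/eqP p1 _].
  by move: pp; rewrite p1.
have [G hG] := GB_exists hto gens.
have [g' g'G [m [hm hd]]] := core hto (@gens_GL l n a i j) hG pp Zpw nZw.
have := hl [set i; j] _ _ G hG g' m g'G hm hd; apply.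
  by rewrite cards2 ij.
exact: arr_codim.
Qed.
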